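(* Let $(L,[\cdot,\cdot],\cdot,\alpha)$ be a multiplicative Hom-post-Lie algebra and let $k$ be a non-negative integer. Define $\{x,y\}:=[\alpha^k(x),y]$ and $x\ast y:=\alpha^k(x)\cdot y$ for $x,y\in L$. Then $(L,\{\cdot,\cdot\},\ast,\alpha)$ (i.e. $L$ with $\diamond=\{\cdot,\cdot\}$, $\bullet=\ast$ and structure map $\alpha$) is a module over the Hom-post-Lie algebra $(L,[\cdot,\cdot],\cdot,\alpha)$.
   Context: All vector spaces are over a field $\mathbb{K}$ of characteristic $\neq 2$. A Hom-Lie algebra is $(L,[\cdot,\cdot],\alpha)$ with $[\cdot,\cdot]$ bilinear and skew-symmetric, $\alpha$ linear, and $[\alpha(x),[y,z]]+[\alpha(y),[z,x]]+[\alpha(z),[x,y]]=0$. A Hom-post-Lie algebra $(L,[\cdot,\cdot],\cdot,\alpha)$ is a Hom-Lie algebra with a bilinear $\cdot$ such that for all $x,y,z$: $\alpha(z)\cdot[x,y]-[z\cdot x,\alpha(y)]-[\alpha(x),z\cdot y]=0$ and $\alpha(z)\cdot(y\cdot x)-\alpha(y)\cdot(z\cdot x)+(y\cdot z)\cdot\alpha(x)-(z\cdot y)\cdot\alpha(x)+[y,z]\cdot\alpha(x)=0$. It is multiplicative if $\alpha([x,y])=[\alpha(x),\alpha(y)]$ and $\alpha(x\cdot y)=\alpha(x)\cdot\alpha(y)$. A module over $L$ is a vector space $M$ with linear $\alpha_M:M\to M$ and bilinear $\diamond,\bullet:L\otimes M\to M$ such that for all $x,y\in L$, $m\in M$: (i)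 $\alpha_M(x\diamond m)=\alpha(x)\diamond\alpha_M(m)$, $\alpha_M(x\bullet m)=\alpha(x)\bullet\alpha_M(m)$; (ii) $[x,y]\diamond\alpha_M(m)=\alpha(x)\diamond(y\diamond m)-\alpha(y)\diamond(x\diamond m)$; (iii) $(x\cdot y)\diamond\alpha_M(m)=\alpha(x)\bullet(y\diamond m)-\alpha(y)\diamond(x\bullet m)$; (iv) $[x,y]\bullet\alpha_M(m)=\alpha(x)\bullet(y\bullet m)-\alpha(y)\bullet(x\bullet m)-(x\cdot y)\bullet\alpha_M(m)+(y\cdot x)\bullet\alpha_M(m)$. *)

(* Defs.v *)
From HB Require Import structures.
From mathcomp Require Import all_boot all_order all_algebra.
Set Implicit Arguments. Unset Strict Implicit. Unset Printing Implicit Defensive.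
Import GRing.Theory.
Local Open Scope ring_scope.

Definition is_linear (K : fieldType) (V W : lmodType K) (f : V -> W) : Prop :=
  forall (a : K) (x y : V), f (a *: x + y) = a *: f x + f y.

Definition is_bilinear (K : fieldType) (U V W : lmodType K) (b : U -> V -> W) : Prop :=
  (forall y, is_linear (fun x => b x y)) /\ (forall x, is_linear (b x)).

Definition is_HomLie (K : fieldType) (L : lmodType K)
  (br : L -> L -> L) (alpha : L -> L) : Prop :=
  [/\ is_bilinear br,
      (forall x y, br x y = - br y x),
      is_linear alpha &
      (forall x y z, br (alpha x) (br y z) + br (alpha y) (br z x)
                     + br (alpha z) (br x y) = 0)].

Definition is_HomPostLie (K : fieldType) (L : lmodType K)
  (br : L -> L -> L) (dot : L -> L -> L) (alpha : L -> L) : Prop :=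
  [/\ is_HomLie br alpha,
      is_bilinear dot,
      (forall x y z, dot (alpha z) (br x y) - br (dot z x) (alpha y)
                     - br (alpha x) (dot z y) = 0) &
      (forall x y z, dot (alpha z) (dot y x) - dot (alpha y) (dot z x)
                     + dot (dot y z) (alpha x) - dot (dot z y) (alpha x)
                     + dot (br y z) (alpha x) = 0)].

Definition is_multiplicative (K : fieldType) (L : lmodType K)
  (br : L -> L -> L) (dot : L -> L -> L) (alpha : L -> L) : Prop :=
  (forall x y, alpha (br x y) = br (alpha x) (alpha y)) /\
  (forall x y, alpha (dot x y) = dot (alpha x) (alpha y)).

Definition is_HomPostLie_module (K : fieldType) (L M : lmodType K)
  (br : L -> L -> L) (dot : L -> L -> L) (alpha : L -> L)
  (alphaM : M -> M) (dia bul : L -> M -> M) : Prop :=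
  [/\ is_linear alphaM, is_bilinear dia & is_bilinear bul] /\
  [/\ (forall x m, alphaM (dia x m) = dia (alpha x) (alphaM m)),
      (forall x m, alphaM (bul x m) = bul (alpha x) (alphaM m)),
      (forall x y m, dia (br x y) (alphaM m) =
                     dia (alpha x) (dia y m) - dia (alpha y) (dia x m)),
      (forall x y m, dia (dot x y) (alphaM m) =
                     bul (alpha x) (dia y m) - dia (alpha y) (bul x m)) &
      (forall x y m, bul (br x y) (alphaM m) =
                     bul (alpha x) (bul y m) - bul (alpha y) (bul x m)
                     - bul (dot x y) (alphaM m) + bul (dot y x) (alphaM m))].

(* Main.v *)
Require Import Defs.
From mathcomp Require Import all_boot all_order all_algebra.
Local Open Scope ring_scope.
Import GRing.Theory.

Lemma iter_lin (K : fieldType) (L : lmodType K) (f : L -> L) k :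
  is_linear f -> is_linear (iter k f).
Proof. move=> hf a x y; elim: k => //= k IH; by rewrite IH hf. Qed.

Lemma iter_morph (T : Type) (f : T -> T) (op : T -> T -> T) k :
  (forall x y, f (op x y) = op (f x) (f y)) ->
  forall x y, iter k f (op x y) = op (iter k f x) (iter k f y).
Proof. move=> h x y; elim: k => //= k IH; by rewrite IH h. Qed.

Lemma linN (K : fieldType) (L : lmodType K) (f : L -> L) x :
  is_linear f -> f (- x) = - f x.
Proof.
move=> hf; have := hf (-1) x 0; rewrite scaleN1r !addr0 => ->.
have h0 : f 0 = 0.
  move: (hf 1 0 0); rewrite !scale1r addr0 -{1}[f 0]addr0.
  by move/(@GRing.Theory.addrI _ (f 0)).
by rewrite h0 addr0 scaleN1r.
Qed.

Theorem mainTheorem2 (K : fieldType) (hK : (2%N \notin [pchar K]))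
  (L : lmodType K) (br dot : L -> L -> L) (alpha : L -> L) (k : nat) :
  is_HomPostLie br dot alpha -> is_multiplicative br dot alpha ->
  is_HomPostLie_module br dot alpha alpha
    (fun x y => br (iter k alpha x) y) (fun x y => dot (iter k alpha x) y).
Proof.
move=> [[[br1 br2] skew alin jac] [dot1 dot2] ax1 ax2] [mbr mdot].
have Alin := @iter_lin _ _ _ k alin.
have Abr := @iter_morph _ _ _ k mbr.
have Adot := @iter_morph _ _ _ k mdot.
have Aa : forall x, iter k alpha (alpha x) = alpha (iter k alpha x).
  by move=> x; rewrite -iterSr -iterS.
split; first split => //.
- split=> [y a x z|x]; last exact: br2.
  by rewrite /= Alin br1.
- split=> [y a x z|x]; last exact: dot2.
  by rewrite /= Alin dot1.
split.
- by move=> x m; rewrite mbr Aa.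
- by move=> x m; rewrite mdot Aa.
- move=> x y m; rewrite Abr !Aa.
  set X := iter k alpha x; set Y := iter k alpha y.
  have J := jac X Y m.
  rewrite [br m X]skew linN // [br (alpha m) _]skew in J.
  by symmetry; apply: subr0_eq.
- move=> x y m; rewrite Adot !Aa.
  set X := iter k alpha x; set Y := iter k alpha y.
  have E := ax1 Y m X.
  by rewrite addrAC in E; symmetry; apply: subr0_eq.
- move=> x y m; rewrite Abr !Adot !Aa.
  set X := iter k alpha x; set Y := iter k alpha y.
  have E := ax2 m X Y.
  move/eqP: E; rewrite addrC addr_eq0 => /eqP ->.
  rewrite !opprD !opprK; congr (_ + _ + _).
  by rewrite addrC.
Qed.
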